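(* For every $\lambda \in \Lambda^{\bullet}(n,r)$, the $\mathbb{C}$-linear span of $B^{\lambda}\setminus \beta^{\lambda}$ is an $\mathbf{S}_0(n,r)$-submodule of $P_\lambda$.
   Context: Let $n,r\ge 0$ be integers. $\Lambda(n,r)$ is the set of weak compositions $\lambda=(\lambda_1,\dots,\lambda_n)$ of $r$ (nonnegative integers summing to $r$), and $\Lambda^{\bullet}(n,r)\subseteq\Lambda(n,r)$ is the set of those $\lambda$ such that $\lambda_i=0$ implies $\lambda_j=0$ for all $j>i$. $M_n(r)$ is the set of $n\times n$ matrices with nonnegative integer entries summing to $r$; for $A=(a_{i,j})\in M_n(r)$, $\mathrm{ro}(A)$ and $\mathrm{co}(A)$ are its row-sum and column-sum vectors. $E_{a,b}$ denotes the $n\times n$ matrix unit, and $D_\lambda=\mathrm{diag}(\lambda_1,\dots,\lambda_n)$. $\mathbf{S}_0(n,r)=S_0(n,r)\otimes_{\mathbb Z}\mathbb{C}$, where $S_0(n,r)=S_q(n,r)\otimes_{\mathbb Z[q]}\mathbb Z[q]/(q)$ is the $0$-Schur algebra, i.e. the specialization at $q=0$ of the Dipper–James $q$-Schur algebra $S_q(n,r)=\mathrm{End}_{H_r(q)}(\bigoplus_{\lambda\in\Lambda(n,r)}x_\lambda H_r(q))$. It has the Jensen–Su standard basis $\{e_A: A\in M_n(r)\}$ with the following properties: - $e_Ae_B=0$ unless $\mathrm{co}(A)=\mathrm{ro}(B)$, in which case $e_Ae_B=e_C$ for a unique $C\in M_n(r)$. - With $k_\lambda:=e_{D_\lambda}$,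 one has $k_\lambda e_A=e_A$ if $\lambda=\mathrm{ro}(A)$ and $0$ otherwise, and $e_Ak_\lambda=e_A$ if $\lambda=\mathrm{co}(A)$ and $0$ otherwise. - For $1\le i\le n-1$, put $e_i=\sum_\lambda e_{D_\lambda-E_{i+1,i+1}+E_{i,i+1}}$ and $f_i=\sum_\lambda e_{D_\lambda-E_{i,i}+E_{i+1,i}}$, the sums running over the $\lambda$ for which these matrices have nonnegative entries. - If $\mathrm{ro}(A)=\lambda$ and $\lambda_{i+1}>0$, then $e_ie_A=e_{A+E_{i,p}-E_{i+1,p}}$, where $p$ is the largest $j$ with $a_{i+1,j}>0$. - If $\lambda_i>0$, then $f_ie_A=e_{A-E_{i,q}+E_{i+1,q}}$, where $q$ is the smallest $j$ with $a_{i,j}>0$. - $e_ie_A=0$ if $\lambda_{i+1}=0$, and $f_ie_A=0$ if $\lambda_i=0$. Construction of $P_\lambda$ (Jensen–Su–Yang). For a strong composition $\alpha=(\alpha_1,\dots,\alpha_s)$ of $n$, cut $\lambda$ into consecutive subsequences of lengths $\alpha_1,\dots,\alpha_s$. We call $\alpha$ maximal with respect to $\lambda$ if each subsequence is either $(0)$ or has neither first nor last entry equal to $0$; $\max(\lambda)$ is the set of such $\alpha$. For an $n\times n$ matrix $A$ and $1\le v\le s$, let $A(\alpha;v)$ be the matrix whose $i$-th column equals that of $A$ if $\alpha_1+\dots+\alpha_{v-1}<i\le \alpha_1+\dots+\alpha_v$, and is zero otherwise. A matrix is open if every $2\times 2$ submatrix has at least one zero on its diagonal (i.e. $a_{i,j}a_{i',j'}=0$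 for all $i<i'$, $j<j'$). $A$ is open on columns with respect to $\alpha$ if every $A(\alpha;v)$ is open. Let $B^{\lambda,\alpha}=\{e_A:\mathrm{co}(A)=\lambda,\ A \text{ open on columns w.r.t. }\alpha\}$ and $$B^\lambda=\{e_A:\mathrm{co}(A)=\lambda\}\setminus\bigcup_{\alpha\in\max(\lambda)\setminus\{(1,\dots,1)\}}B^{\lambda,\alpha}.$$ $P_\lambda$ is the $\mathbb{C}$-span of $B^\lambda$, with action: for $b\in\{e_i,f_i,k_\mu\}$ and $e_A\in B^\lambda$, $b\cdot e_A=e_B$ if $be_A=e_B$ in $S_0(n,r)$ and $e_B\in B^\lambda$, and $b\cdot e_A=0$ otherwise. This is an $\mathbf{S}_0(n,r)$-module, and it is projective indecomposable. A column block diagonal matrix is a matrix $A=(a_{i,j})$ with nonnegative integer entries such that $a_{i,j}>0$ implies $a_{i',s}=0$ for all $i'\le i$ and $s>j$. For $\lambda\in\Lambda^\bullet(n,r)$, $\mathrm{cb}(\lambda)$ is the set of $n\times n$ column block diagonal matrices $A$ with $\mathrm{co}(A)=\lambda$, and $\beta^\lambda=\{e_A:A\in\mathrm{cb}(\lambda)\}$; one has $\beta^\lambda\subseteq B^\lambda$. *)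

(* Defs.v *)
(* Conventions:
   rows/columns and the generator index are 0-based (paper's i = our i+1). *)
From mathcomp Require Import all_boot all_algebra complex.
From mathcomp Require Import Rstruct.
From mathcomp Require Import boolp.

Set Implicit Arguments.
Unset Strict Implicit.
Unset Printing Implicit Defensive.
Delimit Scope ring_scope with ring.

Definition CC : fieldType := (Rdefinitions.R[i])%C.

(* n x n matrices with nonnegative integer entries; every matrix in M_n(r)
   has entries <= r, so M_n(r) embeds in 'M['I_r.+1]_n. *)
Definition Mat (n r : nat) := 'M['I_r.+1]_n.

(* entries indexed by nat (0 outside the matrix) *)
Definition aN n r (A : Mat n r) (k l : nat) : nat :=
  match (insub k : option 'I_n), (insub l : option 'I_n) with
  | Some x, Some y => nat_of_ord (A x y)
  | _, _ => 0
  end.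

Definition rowsum n r (A : Mat n r) (k : nat) : nat := \sum_(j < n) aN A k j.
Definition colsum n r (A : Mat n r) (l : nat) : nat := \sum_(i < n) aN A i l.

Definition ro_eq n r (A : Mat n r) (mu : 'I_n -> nat) : Prop :=
  forall i : 'I_n, rowsum A i = mu i.
Definition co_eq n r (A : Mat n r) (mu : 'I_n -> nat) : Prop :=
  forall j : 'I_n, colsum A j = mu j.

Definition total n r (A : Mat n r) : nat := \sum_(i < n) \sum_(j < n) aN A i j.

Definition is_comp n r (lam : 'I_n -> nat) : Prop := \sum_(i < n) lam i = r.
Definition is_bullet n r (lam : 'I_n -> nat) : Prop :=
  is_comp r lam /\ forall i j : 'I_n, lam i = 0 -> i < j -> lam j = 0.

Definition lamN n (lam : 'I_n -> nat) (k : nat) : nat :=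
  if (insub k : option 'I_n) is Some x then lam x else 0.

Definition strong_comp (n : nat) (alpha : seq nat) : Prop :=
  all (fun a => 0 < a) alpha /\ sumn alpha = n.

(* start (0-based) and length of the v-th block (v 0-based) *)
Definition bstart (alpha : seq nat) (v : nat) : nat := sumn (take v alpha).
Definition blen (alpha : seq nat) (v : nat) : nat := nth 0 alpha v.

Definition is_max n (lam : 'I_n -> nat) (alpha : seq nat) : Prop :=
  strong_comp n alpha /\
  forall v, v < size alpha ->
    let s := bstart alpha v in let a := blen alpha v in
    (a = 1 /\ lamN lam s = 0) \/
    (lamN lam s <> 0 /\ lamN lam (s + a - 1) <> 0).

Definition open_mat (n : nat) (M : nat -> nat -> nat) : Prop :=
  forall i i' j j', i < i' < n -> j < j' < n -> M i j * M i' j' = 0.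

Definition colblock n r (A : Mat n r) (alpha : seq nat) (v : nat) :
  nat -> nat -> nat :=
  fun k l => if (bstart alpha v <= l < bstart alpha v + blen alpha v)
             then aN A k l else 0.

Definition open_on_cols n r (A : Mat n r) (alpha : seq nat) : Prop :=
  forall v, v < size alpha -> open_mat n (colblock A alpha v).

Definition inB n r (lam : 'I_n -> nat) (A : Mat n r) : Prop :=
  co_eq A lam /\
  ~ (exists alpha, is_max lam alpha /\ alpha <> nseq n 1 /\
                   open_on_cols A alpha).

Definition col_block_diag n r (A : Mat n r) : Prop :=
  forall i j, 0 < aN A i j -> forall i' s, i' <= i -> j < s -> aN A i' s = 0.
Definition in_cb n r (lam : 'I_n -> nat) (A : Mat n r) : Prop :=
  col_block_diag A /\ co_eq A lam.

(* A + c1 * E_{i1,p} - c2 * E_{i2,p}, with entries cast back into 'I_r.+1 *)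
Definition move_unit n r (A : Mat n r) (ifrom ito p : nat) : Mat n r :=
  matrix_of_fun matrix_key (fun (x y : 'I_n) =>
    inord (aN A x y + ((x == ito :> nat) && (y == p :> nat))
           - ((x == ifrom :> nat) && (y == p :> nat)))).

Definition last_pos n r (A : Mat n r) (k : nat) : nat :=
  \max_(j < n | 0 < aN A k j) (j : nat).
Definition first_pos n r (A : Mat n r) (k : nat) : nat :=
  \big[minn/n]_(j < n | 0 < aN A k j) (j : nat).

Inductive gen (n : nat) :=
  | GenE of nat
  | GenF of nat
  | GenK of ('I_n -> nat).

Definition valid_gen n r (b : gen n) : Prop :=
  match b with
  | GenE i => i.+1 < n
  | GenF i => i.+1 < n
  | GenK mu => is_comp r mu
  end.

(* the product b * e_A in S_0(n,r): Some B means e_B, None means 0 *)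
Definition gen_mul n r (b : gen n) (A : Mat n r) : option (Mat n r) :=
  match b with
  | GenE i => if rowsum A i.+1 == 0 then None
              else Some (move_unit A i.+1 i (last_pos A i.+1))
  | GenF i => if rowsum A i == 0 then None
              else Some (move_unit A i i.+1 (first_pos A i))
  | GenK mu => if `[< ro_eq A mu >] then Some A else None
  end.

(* Elements of P_lambda are C-valued functions on matrices supported on
   B^lambda (coordinates in the basis B^lambda). *)
Definition vec n r := {ffun Mat n r -> CC}.

Definition supported_on n r (S : Mat n r -> Prop) (w : vec n r) : Prop :=
  forall A, w A != 0%ring -> S A.

(* action of a generator on P_lambda, extended linearly:
   b . e_A = e_B if b e_A = e_B and e_B in B^lambda, 0 otherwise *)
Definition act n r (lam : 'I_n -> nat) (b : gen n) (w : vec n r) : vec n r :=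
  [ffun B => if `[< inB lam B >]
             then (\sum_(A | `[< inB lam A >] && (gen_mul b A == Some B)) w A)%ring
             else 0%ring].

Definition in_span_B_minus_beta n r (lam : 'I_n -> nat) (w : vec n r) : Prop :=
  supported_on (fun A => inB lam A /\ ~ in_cb lam A) w.

(* a subspace of P_lambda given by support condition is an S_0(n,r)-submodule
   iff it is stable under the generators e_i, f_i, k_mu *)
Definition is_submodule n r (lam : 'I_n -> nat) (W : vec n r -> Prop) : Prop :=
  (forall w, W w -> supported_on (inB lam) w) /\
  (W 0%ring) /\
  (forall (c : CC) w1 w2, W w1 -> W w2 -> W (c *: w1 + w2)%ring) /\
  (forall b w, valid_gen r b -> W w -> W (act lam b w)).

(* Main.v *)
Require Import Defs.
From mathcomp Require Import all_boot all_algebra complex.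
From mathcomp Require Import boolp zify.

Definition cbn (a : nat -> nat -> nat) : Prop :=
  forall i j, 0 < a i j -> forall i' s, i' <= i -> j < s -> a i' s = 0.

Lemma f_case (a b : nat -> nat -> nat) i0 q :
  0 < b i0.+1 q ->
  (forall x y, 0 < a x y -> 0 < b x y \/ (x = i0 /\ y = q)) ->
  (forall j, j < q -> a i0 j = 0) -> cbn b -> cbn a.
Proof.
move=> Hbt H2 Hfirst Hb i j Hij i' s Hi' Hjs.
apply/eqP; rewrite -leqn0 leqNgt; apply/negP => Hpos.
case: (H2 i j Hij) => [Bij | [Ei Ej]]; case: (H2 i' s Hpos) => [Bis | [Ei' Es]].
- by rewrite (Hb i j Bij i' s Hi' Hjs) in Bis.
- subst i' s. case: (ltngtP i0 i) => [lt|gt|eq].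
  + by have := Hb i j Bij i0.+1 q lt Hjs; lia.
  + lia.
  + subst i. by rewrite (Hfirst j Hjs) in Hij.
- subst i j. have := Hb i0.+1 q Hbt i' s (leqW Hi') Hjs. by lia.
- subst; lia.
Qed.

Lemma e_case (a b : nat -> nat -> nat) i0 p :
  0 < b i0 p ->
  (forall x y, 0 < a x y -> 0 < b x y \/ (x = i0.+1 /\ y = p)) ->
  (forall s, p < s -> a i0.+1 s = 0) -> cbn b -> cbn a.
Proof.
move=> Hbt H2 Hlast Hb i j Hij i' s Hi' Hjs.
apply/eqP; rewrite -leqn0 leqNgt; apply/negP => Hpos.
case: (H2 i j Hij) => [Bij | [Ei Ej]]; case: (H2 i' s Hpos) => [Bis | [Ei' Es]].
- by rewrite (Hb i j Bij i' s Hi' Hjs) in Bis.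
- subst i' s. have := Hb i j Bij i0 p (ltnW Hi') Hjs. by lia.
- subst i j. case: (ltngtP i' i0.+1) => [lt|gt|eq].
  + have := Hb i0 p Hbt i' s lt Hjs. by lia.
  + lia.
  + subst i'. by rewrite (Hlast s Hjs) in Hpos.
- subst; lia.
Qed.

Section Big.
Variable (I : eqType).

Lemma bigop_sel (op : nat -> nat -> nat) x0 (s : seq I) (P : pred I) (F : I -> nat) :
  (forall x y, op x y = x \/ op x y = y) ->
  \big[op/x0]_(i <- s | P i) F i = x0 \/
  exists i, [/\ i \in s, P i & \big[op/x0]_(i <- s | P i) F i = F i].
Proof.
move=> Hop; elim: s => [|a s IH]; first by left; rewrite big_nil.
rewrite big_cons; case: ifP => Pa.
  case: (Hop (F a) (\big[op/x0]_(i <- s | P i) F i)) => ->.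
    by right; exists a; rewrite mem_head.
  case: IH => [->|[i [i1 i2 i3]]]; first by left.
  by right; exists i; rewrite inE i1 orbT.
case: IH => [->|[i [i1 i2 i3]]]; first by left.
by right; exists i; rewrite inE i1 orbT.
Qed.

Lemma bigmin_le x0 (s : seq I) (P : pred I) (F : I -> nat) j :
  j \in s -> P j -> \big[minn/x0]_(i <- s | P i) F i <= F j.
Proof.
elim: s => [|a s IH] //; rewrite inE big_cons => /orP[/eqP <-|Hj] Pj.
  by rewrite Pj geq_minl.
case: ifP => _; last exact: IH.
by rewrite (leq_trans (geq_minr _ _)) ?IH.
Qed.

Lemma bigmax_ge x0 (s : seq I) (P : pred I) (F : I -> nat) j :
  j \in s -> P j -> F j <= \big[maxn/x0]_(i <- s | P i) F i.
Proof.
elim: s => [|a s IH] //; rewrite inE big_cons => /orP[/eqP <-|Hj] Pj.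
  by rewrite Pj leq_maxl.
case: ifP => _; last exact: IH.
by rewrite (leq_trans (IH Hj Pj)) ?leq_maxr.
Qed.
End Big.

Section Mats.
Variables (n r : nat).

Lemma aN_ord (A : Mat n r) (x y : 'I_n) : aN A x y = A x y.
Proof. by rewrite /aN !valK. Qed.

Lemma aN_pos (A : Mat n r) k l : 0 < aN A k l -> k < n /\ l < n.
Proof.
rewrite /aN; case: (ltnP k n) => Hk; last by rewrite insubF // ltnNge Hk.
case: (ltnP l n) => Hl //.
by rewrite (insubT (fun k => k < n) Hk) insubF // ltnNge Hl.
Qed.

Lemma aN_le (A : Mat n r) k l : aN A k l <= r.
Proof.
rewrite /aN; case: insub => [x|//]; case: insub => [y|//].
by rewrite -ltnS ltn_ord.
Qed.

Lemma aN_move (A : Mat n r) f t p k l : k < n -> l < n ->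
  aN (move_unit A f t p) k l =
  nat_of_ord (inord (aN A k l + ((k == t) && (l == p)) - ((k == f) && (l == p))) : 'I_r.+1).
Proof.
move=> Hk Hl.
have := aN_ord (move_unit A f t p) (Ordinal Hk) (Ordinal Hl).
rewrite /= => ->; rewrite /move_unit mxE /=.
by have := aN_ord A (Ordinal Hk) (Ordinal Hl); rewrite /= => ->.
Qed.

Lemma move_bridge (A : Mat n r) f t p : f < n -> t < n -> p < n -> f != t ->
  0 < aN A f p -> aN A t p < r ->
  0 < aN (move_unit A f t p) t p /\
  forall x y, 0 < aN A x y -> 0 < aN (move_unit A f t p) x y \/ (x = f /\ y = p).
Proof.
move=> Hf Ht Hp Hft Hfp Htp; split.
  rewrite aN_move // !eqxx /= (negbTE (_ : t != f)) 1?eq_sym //= subn0 inordK; lia.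
move=> x y Hxy; have [Hx Hy] := @aN_pos A x y Hxy.
case: (boolP ((x == f) && (y == p))) => [/andP[/eqP -> /eqP ->]|Hn]; first by right.
left; rewrite aN_move // (negbTE Hn) subn0.
case: (boolP ((x == t) && (y == p))) => [/andP[/eqP Ex /eqP Ey]|Hn2].
  subst x y; rewrite inordK; lia.
rewrite ?(negbTE Hn2) /= ?addn0 inordK ?addn0 //; have := aN_le A x y; lia.
Qed.

Lemma col_bound (lam : 'I_n -> nat) (A : Mat n r) f t p :
  is_comp r lam -> co_eq A lam -> f < n -> t < n -> p < n -> f != t ->
  0 < aN A f p -> aN A t p < r.
Proof.
move=> Hcomp Hco Hf Ht Hp Hft Hfp.
have Hlr : lam (Ordinal Hp) <= r.
  by rewrite -Hcomp (bigD1 (Ordinal Hp)) //= leq_addr.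
have := Hco (Ordinal Hp); rewrite /colsum /= (bigD1 (Ordinal Ht)) //=.
rewrite (bigD1 (Ordinal Hf)) /=; last by rewrite -(inj_eq val_inj) /=.
lia.
Qed.

Lemma sum_pos (A : Mat n r) k : rowsum A k != 0 ->
  exists j, j < n /\ 0 < aN A k j.
Proof.
move=> H; case: (pselect (exists j, j < n /\ 0 < aN A k j)) => // Hno.
exfalso; move/eqP: H; apply; apply: big1 => j _.
apply/eqP; rewrite -leqn0 leqNgt; apply/negP => Hj; apply: Hno; exists j; split => //.
Qed.

Lemma first_posP (A : Mat n r) k : rowsum A k != 0 ->
  [/\ first_pos A k < n, 0 < aN A k (first_pos A k) &
      forall j, j < first_pos A k -> aN A k j = 0].
Proof.
move=> /sum_pos [j [Hj Hpos]].
have Hle : first_pos A k <= j.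
  by apply: (@bigmin_le _ n (index_enum 'I_n) (fun j : 'I_n => 0 < aN A k j) (fun i : 'I_n => nat_of_ord i) (Ordinal Hj)) => //; rewrite mem_index_enum.
have Hlt : forall j', j' < first_pos A k -> aN A k j' = 0.
  move=> j' Hj'; apply/eqP; rewrite -leqn0 leqNgt; apply/negP => Hp.
  have Hj'n : j' < n by lia.
  have : first_pos A k <= j'.
    by apply: (@bigmin_le _ n (index_enum 'I_n) (fun j : 'I_n => 0 < aN A k j) (fun i : 'I_n => nat_of_ord i) (Ordinal Hj'n)) => //; rewrite mem_index_enum.
  lia.
case: (@bigop_sel _ minn n (index_enum 'I_n) (fun j : 'I_n => 0 < aN A k j) (fun i : 'I_n => nat_of_ord i) _).
- move=> x y; rewrite /minn; case: ifP; by [left|right].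
- rewrite -/(first_pos A k) => E; lia.
- move=> [i [_ Pi Ei]]; rewrite -/(first_pos A k) in Ei; rewrite Ei; split => //; by rewrite -Ei.
Qed.

Lemma last_posP (A : Mat n r) k : rowsum A k != 0 ->
  [/\ last_pos A k < n, 0 < aN A k (last_pos A k) &
      forall j, last_pos A k < j -> aN A k j = 0].
Proof.
move=> /sum_pos [j [Hj Hpos]].
have Hgt : forall j', last_pos A k < j' -> aN A k j' = 0.
  move=> j' Hj'; apply/eqP; rewrite -leqn0 leqNgt; apply/negP => Hp.
  have [_ Hj'n] := @aN_pos A k j' Hp.
  have : j' <= last_pos A k.
    by apply: (@bigmax_ge _ 0 (index_enum 'I_n) (fun j : 'I_n => 0 < aN A k j) (fun i : 'I_n => nat_of_ord i) (Ordinal Hj'n)) => //; rewrite mem_index_enum.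
  lia.
have Hge : j <= last_pos A k.
  by apply: (@bigmax_ge _ 0 (index_enum 'I_n) (fun j : 'I_n => 0 < aN A k j) (fun i : 'I_n => nat_of_ord i) (Ordinal Hj)) => //; rewrite mem_index_enum.
case: (@bigop_sel _ maxn 0 (index_enum 'I_n) (fun j : 'I_n => 0 < aN A k j) (fun i : 'I_n => nat_of_ord i) _).
- move=> x y; rewrite /maxn; case: ifP; by [right|left].
- rewrite -/(last_pos A k) => E; rewrite E in Hge *.
  have j0 : j = 0 by lia.
  subst j; split => // j1 Hj1; by apply: Hgt; rewrite E.
- move=> [i [_ Pi Ei]]; rewrite -/(last_pos A k) in Ei; rewrite Ei; split => //.
  by rewrite -Ei.
Qed.

End Mats.

Theorem mainTheorem1 (n r : nat) (lam : 'I_n -> nat) :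
  is_bullet r lam ->
  is_submodule lam (@in_span_B_minus_beta n r lam).
Proof.
move=> [Hcomp _].
split; first by move=> w Hw A HA; case: (Hw A HA).
split; first by move=> A; rewrite ffunE eqxx.
split.
  move=> c w1 w2 H1 H2 A; rewrite !ffunE /=.
  case: (eqVneq (w1 A) 0%R) => [E1|N1]; last by move=> _; exact: H1.
  case: (eqVneq (w2 A) 0%R) => [E2|N2]; last by move=> _; exact: H2.
  by rewrite E1 E2 GRing.scaler0 GRing.addr0 eqxx.
move=> b w Hvb Hw B; rewrite ffunE.
case: ifP => [/asboolP HB Hne|]; last by rewrite eqxx.
have [A [HA Hg HwA]] : exists A, [/\ inB lam A, gen_mul b A = Some B & (w A != 0)%R].
  case: (pselect (exists A, [/\ inB lam A, gen_mul b A = Some B & (w A != 0)%R])) => // Hno.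
  exfalso; move/eqP: Hne; apply; apply: big1 => A /andP[/asboolP HA' /eqP Hg'].
  apply/eqP; apply/negPn/negP => Hw'; apply: Hno; exists A; split => //.
have [_ HncA] := Hw A HwA.
split => // -[HcbB HcoB]; apply: HncA; split; last exact: HA.1.
have HcoA := HA.1.
clear Hne Hw HwA; case: b Hvb Hg => [i|i|mu] /= Hv.
- case: ifP => // Hrs [EB]; rewrite -EB in HcbB.
  have [Hpn Hpp Hlast] := @last_posP n r A i.+1 (negbT Hrs).
  have Hne' : i.+1 != i by rewrite eq_sym neq_ltn ltnSn.
  have Hb := @col_bound n r lam A i.+1 i _ Hcomp HcoA Hv (ltnW Hv) Hpn Hne' Hpp.
  have [H1 H2] := @move_bridge n r A i.+1 i _ Hv (ltnW Hv) Hpn Hne' Hpp Hb.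
  exact: (e_case _ _ _ _ H1 H2 Hlast HcbB).
- case: ifP => // Hrs [EB]; rewrite -EB in HcbB.
  have [Hpn Hpp Hfirst] := @first_posP n r A i (negbT Hrs).
  have Hne' : i != i.+1 by rewrite neq_ltn ltnSn.
  have Hb := @col_bound n r lam A i i.+1 _ Hcomp HcoA (ltnW Hv) Hv Hpn Hne' Hpp.
  have [H1 H2] := @move_bridge n r A i i.+1 _ (ltnW Hv) Hv Hpn Hne' Hpp Hb.
  exact: (f_case _ _ _ _ H1 H2 Hfirst HcbB).
- by case: ifP => // _ [EB]; rewrite -EB in HcbB.
Qed.
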